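(* With $\alpha=(1+\sqrt5)/2$, $\beta=(1-\sqrt5)/2$, the following hold: $$\operatorname{Li}_2\Big(\frac\alpha2\Big)+\operatorname{Li}_2\Big(\frac\beta2\Big)=\frac{\pi^2}{12}+2\ln^2\alpha-\ln^2 2,$$ $$\operatorname{Li}_2\Big(\frac{\alpha^3}5\Big)+\operatorname{Li}_2\Big(\frac{\beta^3}5\Big)=\frac{\pi^2}{12}+6\ln^2\alpha-2\ln^22+2\ln2\ln5-\ln^25-\operatorname{Li}_2\Big(-\frac14\Big);$$ for every even integer $r\ge0$, $$\operatorname{Li}_2\Big(\frac{\alpha^r}{L_r}\Big)+\operatorname{Li}_2\Big(\frac{\beta^r}{L_r}\Big)=\frac{\pi^2}{6}+r^2\ln^2\alpha-\ln^2(L_r),$$ in particular $\operatorname{Li}_2(\alpha^2/3)+\operatorname{Li}_2(\beta^2/3)=\frac{\pi^2}6+4\ln^2\alpha-\ln^23$; for every odd integer $r\ge1$, $$\operatorname{Li}_2\Big(\frac{\alpha^r}{\sqrt5F_r}\Big)+\operatorname{Li}_2\Big(\frac{-\beta^r}{\sqrt5F_r}\Big)=\frac{\pi^2}{6}+r^2\ln^2\alpha-\frac14\ln^25-\ln5\ln(F_r)-\ln^2(F_r),$$ in particular $\operatorname{Li}_2(\alpha/\sqrt5)+\operatorname{Li}_2(-\beta/\sqrt5)=\frac{\pi^2}6+\ln^2\alpha-\frac14\ln^25$; and $$\operatorname{Li}_2\Big(\frac{\alpha^2}4\Big)+\operatorname{Li}_2\Big(\frac{\beta^2}4\Big)=\frac{\pi^2}{6}+2\ln^2\alpha-\frac12\ln^25+2\ln2\ln5-4\ln^22-\operatorname{Li}_2\Big(\frac15\Big),$$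 $$\operatorname{Li}_2\Big(\frac\alpha3\Big)+\operatorname{Li}_2\Big(\frac\beta3\Big)=\ln^2\alpha-\frac14\ln^25+\ln3\ln5-\ln^23+\frac32\operatorname{Li}_2\Big(\frac15\Big)-\frac12\operatorname{Li}_2\Big(\frac1{25}\Big).$$
   Context: $\operatorname{Li}_2(x)=\sum_{k\ge1}x^k/k^2$ is the dilogarithm (for real $x\le1$). $F_n=(\alpha^n-\beta^n)/(\alpha-\beta)$ and $L_n=\alpha^n+\beta^n$ are the Fibonacci and Lucas numbers. *)

(* Defs.v *)
From Stdlib Require Import Reals Lra.
From Coquelicot Require Import Coquelicot.
Open Scope R_scope.

Definition Li2 (x : R) : R := Series (fun k : nat => x ^ (S k) / (INR (S k)) ^ 2).

Definition alpha : R := (1 + sqrt 5) / 2.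
Definition beta : R := (1 - sqrt 5) / 2.

Definition Fib (n : nat) : R := (alpha ^ n - beta ^ n) / (alpha - beta).
Definition Luc (n : nat) : R := alpha ^ n + beta ^ n.

(* Main.v *)
Require Import Defs.
From Stdlib Require Import Reals Arith Lra Lia.
From Coquelicot Require Import Coquelicot.
Open Scope R_scope.

Definition a2 (n : nat) : R := / (INR (S n)) ^ 2.
Definition bL : nat -> R := PS_incr_1 a2.
Definition cG (n : nat) : R := / INR (S n).
Definition G (x : R) : R := PSeries cG x.

Lemma Li2_PSeries x : Li2 x = PSeries bL x.
Proof.
  unfold bL. rewrite PSeries_incr_1. unfold PSeries, Li2.
  rewrite <- Series_scal_l. apply Series_ext. intro n.
  unfold a2. assert (Hm : INR (S n) <> 0) by (apply not_0_INR; lia).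
  set (m := INR (S n)) in *. change (scal ?a ?b) with (a * b).
  simpl. field. auto.
Qed.

Lemma lim_inv_n : is_lim_seq (fun n => / INR (S (S n))) 0.
Proof.
  assert (H := is_lim_seq_inv _ _ is_lim_seq_INR).
  assert (H' : is_lim_seq (fun n => / INR n) 0).
  { apply (is_lim_seq_ext (fun n => / INR n) _); [reflexivity|].
    replace (Finite 0) with (Rbar_inv p_infty) by reflexivity. apply H. discriminate. }
  apply (is_lim_seq_incr_n _ 2) in H'.
  apply (is_lim_seq_ext _ _ _ (fun n => f_equal (fun m => / INR m) (Nat.add_comm n 2))) in H'.
  exact H'.
Qed.

Lemma radius_a2 : CV_radius a2 = 1.
Proof.
  rewrite <- Rinv_1 at 1.
  apply CV_radius_finite_DAlembert.
  - intro n. unfold a2. apply Rinv_neq_0_compat. apply pow_nonzero. apply not_0_INR. lia.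
  - lra.
  - apply (is_lim_seq_ext (fun n => (1 - / INR (S (S n))) * (1 - / INR (S (S n))))).
    + intro n. unfold a2.
      assert (H1 : INR (S n) <> 0) by (apply not_0_INR; lia).
      assert (H2 : INR (S (S n)) <> 0) by (apply not_0_INR; lia).
      assert (H3: 0 < INR (S n)) by (apply lt_0_INR; lia).
      assert (H4: 0 < INR (S (S n))) by (apply lt_0_INR; lia).
      rewrite Rabs_pos_eq.
      * rewrite (S_INR (S n)). rewrite (S_INR (S n)) in H2, H4. field. split; lra.
      * apply Rlt_le. apply Rdiv_lt_0_compat; apply Rinv_0_lt_compat; apply pow_lt; auto.
    + replace (Finite 1) with (Finite ((1 - 0) * (1 - 0))) by (f_equal; ring).
      apply is_lim_seq_mult'; apply is_lim_seq_minus'; try apply is_lim_seq_const; apply lim_inv_n.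
Qed.

Lemma radius_bL : CV_radius bL = 1.
Proof. unfold bL. rewrite CV_radius_incr_1. apply radius_a2. Qed.

Lemma PS_derive_bL n : PS_derive bL n = cG n.
Proof.
  unfold PS_derive, bL, PS_incr_1, cG, a2.
  assert (H1 : INR (S n) <> 0) by (apply not_0_INR; lia). field. auto.
Qed.

Lemma radius_cG : CV_radius cG = 1.
Proof.
  rewrite <- radius_bL, <- (CV_radius_derive bL). apply CV_radius_ext. intro n. now rewrite PS_derive_bL.
Qed.

Lemma inside1 x : -1 < x < 1 -> Rbar_lt (Rabs x) 1.
Proof. intro H. simpl. apply Rabs_def1; lra. Qed.

Lemma Li2_derive x : -1 < x < 1 -> is_derive Li2 x (G x).
Proof.
  intro H. apply (is_derive_ext (PSeries bL)). { intro t. now rewrite Li2_PSeries. }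
  unfold G. rewrite <- (PSeries_ext _ _ _ PS_derive_bL).
  apply is_derive_PSeries. rewrite radius_bL. now apply inside1.
Qed.

Lemma const_deriv (f : R -> R) (a b : R) :
  (forall x, a < x < b -> is_derive f x 0) ->
  forall x y, a < x < b -> a < y < b -> f x = f y.
Proof.
  intros Hd x y Hx Hy.
  destruct (MVT_gen f x y (fun _ => 0)) as [c [_ Hc]].
  - intros t Ht. apply Hd. split.
    + apply Rle_lt_trans with (Rmin x y); [|lra]. apply Rmin_glb; lra.
    + apply Rlt_le_trans with (Rmax x y); [lra|]. apply Rmax_lub; lra.
  - intros t Ht. apply continuity_pt_filterlim. apply (ex_derive_continuous (K := R_AbsRing) (V := R_NormedModule)).
    eexists. apply Hd. split.
    + apply Rlt_le_trans with (Rmin x y); [|lra]. apply Rmin_glb_lt; lra.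
    + apply Rle_lt_trans with (Rmax x y); [lra|]. apply Rmax_lub_lt; lra.
  - lra.
Qed.

Lemma is_derive_plusR (f g : R -> R) x df dg :
  is_derive f x df -> is_derive g x dg -> is_derive (fun t => f t + g t) x (df + dg).
Proof. intros H1 H2. exact (is_derive_plus f g x df dg H1 H2). Qed.

Lemma geomPS x : -1 < x < 1 -> PSeries (fun _ => 1) x = / (1 - x).
Proof.
  intro H. apply is_pseries_unique. unfold is_pseries.
  apply (is_series_ext (fun n => x ^ n)).
  - intro n. rewrite <- pow_n_pow. unfold scal; simpl. unfold mult; simpl. change (x ^ n = x ^ n * 1). ring.
  - apply is_series_geom. apply Rabs_def1; lra.
Qed.

Lemma xG x : -1 < x < 1 -> x * G x = - ln (1 - x).
Proof.
  intro Hx.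
  set (K := fun t => PSeries (PS_incr_1 cG) t + ln (1 - t)).
  assert (HK : forall t, -1 < t < 1 -> is_derive K t 0).
  { intros t Ht. unfold K.
    replace 0 with (/ (1 - t) + (-1) / (1 - t)) by (field; lra).
    apply is_derive_plusR.
    - rewrite <- (geomPS t Ht).
      rewrite <- (PSeries_ext (PS_derive (PS_incr_1 cG))).
      + apply is_derive_PSeries. rewrite CV_radius_incr_1, radius_cG. now apply inside1.
      + intro n. unfold PS_derive, PS_incr_1, cG.
        assert (H1 : INR (S n) <> 0) by (apply not_0_INR; lia). field. auto.
    - auto_derive. lra. field. lra. }
  assert (E := const_deriv K (-1) 1 HK x 0 Hx ltac:(lra)).
  unfold K in E. rewrite PSeries_incr_1 in E. rewrite PSeries_incr_1 in E.
  unfold G. rewrite Rminus_0_r, ln_1 in E. lra.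
Qed.

Lemma G0 : G 0 = 1.
Proof. unfold G. rewrite PSeries_0. unfold cG. simpl. field. Qed.

Lemma G_eq x : -1 < x < 1 -> x <> 0 -> G x = - ln (1 - x) / x.
Proof. intros H H0. rewrite <- xG; auto. field. auto. Qed.

Lemma Derive_Li2 z : -1 < z < 1 -> Derive Li2 z = G z.
Proof. intro H. apply is_derive_unique. now apply Li2_derive. Qed.

Lemma ex_Li2 z : -1 < z < 1 -> ex_derive Li2 z.
Proof. intro H. eexists. now apply Li2_derive. Qed.

Lemma Li2_0 : Li2 0 = 0.
Proof. rewrite Li2_PSeries, PSeries_0. reflexivity. Qed.

Lemma landen x : -1 < x < 1/2 -> Li2 x + Li2 (x / (x - 1)) = - / 2 * ln (1 - x) ^ 2.
Proof.
  intro Hx.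
  set (h := fun t => Li2 t + Li2 (t / (t - 1)) + / 2 * ln (1 - t) ^ 2).
  assert (Hd : forall t, -1 < t < 1/2 -> is_derive h t 0).
  { intros t Ht. unfold h.
    assert (Hz : -1 < t / (t - 1) < 1).
    { split; [apply Rmult_lt_reg_r with (1 - t)|apply Rmult_lt_reg_r with (1 - t)]; try lra;
      unfold Rdiv; replace (t * / (t - 1) * (1 - t)) with (- t) by (field; lra); lra. }
    auto_derive.
    - repeat split; try (apply ex_Li2; lra); try (apply ex_Li2; exact Hz); lra.
    - rewrite !Derive_Li2; try lra; auto.
      change (t * / (t + - (1))) with (t / (t - 1)).
      change (1 + - t) with (1 - t). change (t + - (1)) with (t - 1).
      destruct (Req_dec t 0) as [E|E].
      + subst t. replace (0 / (0 - 1)) with 0 by field. rewrite G0, Rminus_0_r, ln_1. field.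
      + rewrite !G_eq; auto.
        * replace (1 - t / (t - 1)) with (/ (1 - t)) by (field; lra).
          rewrite ln_Rinv by lra. field. lra.
        * unfold Rdiv. apply Rmult_integral_contrapositive. split; auto. apply Rinv_neq_0_compat. lra.
        * lra. }
  assert (E := const_deriv h (-1) (1/2) Hd x 0 Hx ltac:(lra)).
  unfold h in E. replace (0 / (0 - 1)) with 0 in E by field.
  rewrite Li2_0, Rminus_0_r, ln_1 in E. lra.
Qed.

Lemma dup x : -1 < x < 1 -> Li2 x + Li2 (- x) = / 2 * Li2 (x * x).
Proof.
  intro Hx.
  set (h := fun t => Li2 t + Li2 (- t) - / 2 * Li2 (t * t)).
  assert (Hd : forall t, -1 < t < 1 -> is_derive h t 0).
  { intros t Ht. unfold h.
    assert (Hz : -1 < t * t < 1) by nra.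
    auto_derive.
    - repeat split; try (apply ex_Li2; lra); try (apply ex_Li2; exact Hz); lra.
    - rewrite !Derive_Li2; try lra; auto.
      destruct (Req_dec t 0) as [E|E].
      + subst t. rewrite Ropp_0, Rmult_0_l, G0. field.
      + rewrite !G_eq; try lra; auto.
        * replace (1 - t * t) with ((1 - t) * (1 - - t)) by ring.
          rewrite ln_mult by lra. field. auto. }
  assert (E := const_deriv h (-1) 1 Hd x 0 Hx ltac:(lra)).
  unfold h in E. rewrite Ropp_0, Rmult_0_l, Li2_0 in E. lra.
Qed.

Lemma lin1 (P Q a b K : R) : a = b -> P - Q = K * (a - b) -> P = Q.
Proof. intros H1 H2. rewrite H1, Rminus_diag, Rmult_0_r in H2. lra. Qed.

Lemma is_RInt_lin2 (f g : R -> R) a b If Ig p q :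
  is_RInt f a b If -> is_RInt g a b Ig ->
  is_RInt (fun x => p * f x + q * g x) a b (p * If + q * Ig).
Proof.
  intros H1 H2.
  pose proof (is_RInt_plus _ _ _ _ _ _ (is_RInt_scal _ _ _ p _ H1) (is_RInt_scal _ _ _ q _ H2)) as H.
  exact H.
Qed.

Lemma is_RInt_lin3 (f g h : R -> R) a b If Ig Ih p q r :
  is_RInt f a b If -> is_RInt g a b Ig -> is_RInt h a b Ih ->
  is_RInt (fun x => p * f x + q * g x + r * h x) a b (p * If + q * Ig + r * Ih).
Proof.
  intros H1 H2 H3.
  pose proof (is_RInt_plus _ _ _ _ _ _ (is_RInt_lin2 _ _ _ _ _ _ p q H1 H2) (is_RInt_scal _ _ _ r _ H3)) as H.
  exact H.
Qed.

Definition fI (n : nat) (x : R) := cos x ^ (2 * n).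
Definition fJ (n : nat) (x : R) := x ^ 2 * cos x ^ (2 * n).
Definition Iint (n : nat) : R := RInt (fI n) 0 (PI / 2).
Definition Jint (n : nat) : R := RInt (fJ n) 0 (PI / 2).

Lemma contR (f : R -> R) x : ex_derive f x -> continuous f x.
Proof. apply (ex_derive_continuous (K := R_AbsRing) (V := R_NormedModule)). Qed.

Lemma cont_fI n x : continuous (fI n) x.
Proof. apply contR. unfold fI. auto_derive. auto. Qed.
Lemma cont_fJ n x : continuous (fJ n) x.
Proof. apply contR. unfold fJ. auto_derive. auto. Qed.

Lemma ex_RInt_cont (f : R -> R) a b : (forall x, continuous f x) -> ex_RInt f a b.
Proof. intro H. apply (ex_RInt_continuous (V := R_CompleteNormedModule)). intros; apply H. Qed.

Lemma I_is n : is_RInt (fI n) 0 (PI / 2) (Iint n).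
Proof. apply (RInt_correct (V := R_CompleteNormedModule)). apply ex_RInt_cont. apply cont_fI. Qed.
Lemma J_is n : is_RInt (fJ n) 0 (PI / 2) (Jint n).
Proof. apply (RInt_correct (V := R_CompleteNormedModule)). apply ex_RInt_cont. apply cont_fJ. Qed.

Lemma is_RInt_deriv0 (F h : R -> R) a b (v : R) :
  (forall x, is_derive F x (h x)) -> (forall x, continuous h x) ->
  is_RInt h a b v -> v = F b - F a.
Proof.
  intros H1 H2 H3.
  assert (H4 : is_RInt h a b (minus (F b) (F a))).
  { apply (is_RInt_derive (V := R_CompleteNormedModule)); intros; auto. }
  apply (is_RInt_unique (V := R_CompleteNormedModule)) in H3.
  apply (is_RInt_unique (V := R_CompleteNormedModule)) in H4.
  rewrite <- H3, H4. reflexivity.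
Qed.

Lemma I_rec n : (2 * INR n + 2) * Iint (S n) = (2 * INR n + 1) * Iint n.
Proof.
  pose proof (is_RInt_lin2 _ _ _ _ _ _ (2 * INR n + 2) (- (2 * INR n + 1)) (I_is (S n)) (I_is n)) as H.
  apply (is_RInt_deriv0 (fun x => sin x * cos x ^ (S (2 * n)))) in H.
  - rewrite cos_PI2, sin_0 in H. simpl pow in H. lra.
  - intro x. unfold fI. auto_derive. auto.
    replace (n + (n + 0))%nat with (2 * n)%nat by lia.
    change (match (2 * n)%nat with 0%nat => 1 | S _ => INR (2 * n) + 1 end) with (INR (S (2 * n))).
    replace (2 * S n)%nat with (S (S (2 * n))) by lia.
    change (cos x ^ S (S (2*n))) with (cos x * (cos x * cos x ^ (2*n))).
    rewrite S_INR, mult_INR. simpl INR.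
    apply (lin1 _ _ _ _ (- (2 * INR n + 1) * cos x ^ (2 * n)) (sin2 x)). unfold Rsqr. ring.
  - intro x. apply contR. unfold fI. auto_derive. auto.
Qed.

Lemma J_rec n : Iint (S n) = (INR n + 1) * (2 * INR n + 1) * Jint n - 2 * (INR n + 1) ^ 2 * Jint (S n).
Proof.
  pose proof (is_RInt_lin3 _ _ _ _ _ _ _ _ ((INR n + 1) * (2 * INR n + 2)) (- ((INR n + 1) * (2 * INR n + 1))) 1
     (J_is (S n)) (J_is n) (I_is (S n))) as H.
  apply (is_RInt_deriv0 (fun x => (INR n + 1) * (x ^ 2 * (sin x * cos x ^ (S (2 * n)))) + x * cos x ^ (S (S (2 * n))))) in H.
  - rewrite cos_PI2, sin_0 in H. simpl pow in H. lra.
  - intro x. unfold fI, fJ. auto_derive. auto.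
    replace (n + (n + 0))%nat with (2 * n)%nat by lia.
    change (match (2 * n)%nat with 0%nat => 1 | S _ => INR (2 * n) + 1 end) with (INR (S (2 * n))).
    change (match S (2 * n) with 0%nat => 1 | S _ => INR (S (2 * n)) + 1 end) with (INR (S (S (2 * n)))).
    replace (2 * S n)%nat with (S (S (2 * n))) by lia.
    change (cos x ^ S (S (2*n))) with (cos x * (cos x * cos x ^ (2*n))).
    change (cos x ^ S (2*n)) with (cos x * cos x ^ (2*n)).
    rewrite !S_INR, mult_INR. simpl INR.
    apply (lin1 _ _ _ _ (- (INR n + 1) * (2 * INR n + 1) * x ^ 2 * cos x ^ (2 * n)) (sin2 x)). unfold Rsqr. ring.
  - intro x. apply contR. unfold fI, fJ. auto_derive. auto.
Qed.

Lemma I0 : Iint 0 = PI / 2.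
Proof.
  pose proof (I_is 0) as H.
  apply (is_RInt_deriv0 (fun x => x)) in H. lra.
  - intro x. unfold fI. auto_derive. auto. simpl. ring.
  - intro x. apply contR. unfold fI. auto_derive. auto.
Qed.

Lemma J0 : Jint 0 = (PI / 2) ^ 3 / 3.
Proof.
  pose proof (J_is 0) as H.
  apply (is_RInt_deriv0 (fun x => x ^ 3 / 3)) in H.
  - rewrite H. simpl. field.
  - intro x. unfold fJ. auto_derive. auto. simpl. field.
  - intro x. apply contR. unfold fJ. auto_derive. auto.
Qed.

Lemma I_pos n : 0 < Iint n.
Proof.
  induction n.
  - rewrite I0. apply PI2_RGT_0.
  - pose proof (I_rec n). pose proof (pos_INR n).
    assert (Iint (S n) = (2 * INR n + 1) / (2 * INR n + 2) * Iint n) by (apply (Rmult_eq_reg_l (2 * INR n + 2)); [rewrite H; field; lra | lra]).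
    rewrite H1. apply Rmult_lt_0_compat; auto. apply Rdiv_lt_0_compat; lra.
Qed.

Lemma xcos_le_sin x : 0 <= x <= PI / 2 -> x * cos x <= sin x.
Proof.
  intro Hx.
  destruct (MVT_gen (fun t => sin t - t * cos t) 0 x (fun t => t * sin t)) as [c [Hc E]].
  - intros t _. auto_derive. auto. ring.
  - intros t _. apply continuity_pt_filterlim. apply (contR (fun t => sin t - t * cos t)). auto_derive. auto.
  - rewrite Rmin_left in Hc by lra. rewrite Rmax_right in Hc by lra.
    rewrite sin_0, Rmult_0_l in E.
    assert (0 <= sin c) by (apply sin_ge_0; pose proof PI2_RGT_0; lra).
    assert (0 <= c * sin c * (x - 0)) by (apply Rmult_le_pos; [apply Rmult_le_pos|]; lra).
    lra.
Qed.

Lemma J_bound n : Jint (S n) <= Iint n - Iint (S n).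
Proof.
  pose proof (is_RInt_lin2 _ _ _ _ _ _ 1 (-1) (I_is n) (I_is (S n))) as H.
  apply (is_RInt_unique (V := R_CompleteNormedModule)) in H.
  replace (Iint n - Iint (S n)) with (1 * Iint n + -1 * Iint (S n)) by ring.
  rewrite <- H. unfold Jint.
  apply RInt_le.
  - pose proof PI2_RGT_0; lra.
  - apply ex_RInt_cont. apply cont_fJ.
  - apply ex_RInt_cont. intro x. apply contR. unfold fI. auto_derive. auto.
  - intros x Hx. unfold fJ, fI.
    replace (2 * S n)%nat with (S (S (2 * n))) by lia.
    change (cos x ^ S (S (2*n))) with (cos x * (cos x * cos x ^ (2*n))).
    assert (H1 := xcos_le_sin x ltac:(lra)).
    assert (H2 : 0 <= cos x) by (apply cos_ge_0; pose proof PI2_RGT_0; lra).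
    assert (H3 : 0 <= cos x ^ (2 * n)) by (rewrite pow_mult; apply pow_le; nra).
    assert (H4 : 0 <= x * cos x) by nra.
    assert (H5 : (x * cos x) ^ 2 <= sin x ^ 2) by (simpl; nra).
    pose proof (sin2 x) as H6. unfold Rsqr in H6.
    replace (x ^ 2 * (cos x * (cos x * cos x ^ (2 * n)))) with ((x * cos x) ^ 2 * cos x ^ (2 * n)) by ring.
    replace (1 * cos x ^ (2 * n) + -1 * (cos x * (cos x * cos x ^ (2 * n)))) with (sin x ^ 2 * cos x ^ (2 * n)) by (simpl; rewrite Rmult_1_r, H6; ring).
    apply Rmult_le_compat_r; auto.
Qed.

Lemma tele n : / (INR n + 1) ^ 2 = 2 * (Jint n / Iint n) - 2 * (Jint (S n) / Iint (S n)).
Proof.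
  pose proof (I_rec n). pose proof (J_rec n). pose proof (pos_INR n).
  pose proof (I_pos n). pose proof (I_pos (S n)).
  assert (E1 : Iint (S n) = (2 * INR n + 1) / (2 * INR n + 2) * Iint n) by (apply (Rmult_eq_reg_l (2 * INR n + 2)); [rewrite H; field; lra | lra]).
  assert (E2 : Jint (S n) = ((INR n + 1) * (2 * INR n + 1) * Jint n - Iint (S n)) / (2 * (INR n + 1) ^ 2)) by (rewrite H0; field; lra).
  rewrite E2, E1. field. repeat split; try lra.
Qed.

Lemma J_nonneg n : 0 <= Jint n.
Proof.
  unfold Jint. replace 0 with (RInt (fun _ : R => 0) 0 (PI / 2)) at 1.
  2:{ rewrite RInt_const. unfold scal; simpl. unfold mult; simpl. ring. }
  apply RInt_le.
  - pose proof PI2_RGT_0; lra.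
  - apply ex_RInt_cont. intro; apply contR. auto_derive. auto.
  - apply ex_RInt_cont. apply cont_fJ.
  - intros x Hx. unfold fJ. rewrite pow_mult. apply Rmult_le_pos; apply pow_le; nra.
Qed.

Lemma partial_basel N : sum_n (fun k => / INR (S k) ^ 2) N = PI ^ 2 / 6 - 2 * (Jint (S N) / Iint (S N)).
Proof.
  induction N.
  - rewrite sum_O. pose proof (tele 0) as T. rewrite I0, J0 in T.
    replace (INR 0 + 1) with (INR 1) in T by (simpl; ring).
    replace (2 * ((PI / 2) ^ 3 / 3 / (PI / 2))) with (PI ^ 2 / 6) in T by (field; pose proof PI_RGT_0; lra).
    lra.
  - rewrite sum_Sn, IHN. pose proof (tele (S N)) as T. rewrite <- S_INR in T.
    change (plus ?a ?b) with (a + b). cbv beta. lra.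
Qed.

Lemma lim_inv_S : is_lim_seq (fun n => / INR (S n)) 0.
Proof.
  assert (H := is_lim_seq_inv _ _ is_lim_seq_INR).
  assert (H' : is_lim_seq (fun n => / INR n) 0).
  { apply (is_lim_seq_ext (fun n => / INR n) _); [reflexivity|].
    replace (Finite 0) with (Rbar_inv p_infty) by reflexivity. apply H. discriminate. }
  apply (is_lim_seq_incr_n _ 1) in H'.
  apply (is_lim_seq_ext _ _ _ (fun n => f_equal (fun m => / INR m) (Nat.add_comm n 1))) in H'.
  exact H'.
Qed.

Lemma basel : is_series (fun k => / INR (S k) ^ 2) (PI ^ 2 / 6).
Proof.
  assert (L : is_lim_seq (fun N => Jint (S N) / Iint (S N)) 0).
  { apply (is_lim_seq_le_le (fun _ => 0) _ (fun n => / INR (S n))).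
    - intro n. pose proof (J_nonneg (S n)). pose proof (I_pos (S n)). pose proof (I_pos n).
      pose proof (J_bound n). pose proof (I_rec n). pose proof (pos_INR n).
      split.
      + apply Rdiv_le_0_compat; lra.
      + assert (E1 : Iint (S n) = (2 * INR n + 1) / (2 * INR n + 2) * Iint n) by (apply (Rmult_eq_reg_l (2 * INR n + 2)); [rewrite H3; field; lra | lra]).
        apply Rle_trans with ((Iint n - Iint (S n)) / Iint (S n)).
        * apply Rmult_le_compat_r; [left; apply Rinv_0_lt_compat; lra | lra].
        * assert (EQ : (Iint n - Iint (S n)) / Iint (S n) = / (2 * INR n + 1)).
          { rewrite E1. field. repeat split; try lra. }
          rewrite EQ, S_INR. apply Rinv_le_contravar; lra.
    - apply is_lim_seq_const.
    - apply lim_inv_S. }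
  assert (L2 : is_lim_seq (fun N => PI ^ 2 / 6 - 2 * (Jint (S N) / Iint (S N))) (PI ^ 2 / 6)).
  { replace (Finite (PI ^ 2 / 6)) with (Finite (PI ^ 2 / 6 - 2 * 0)) by (f_equal; ring).
    apply is_lim_seq_minus'. apply is_lim_seq_const. apply is_lim_seq_mult'. apply is_lim_seq_const. exact L. }
  apply (is_lim_seq_ext _ (sum_n (fun k => / INR (S k) ^ 2))) in L2.
  - exact L2.
  - intro N. now rewrite partial_basel.
Qed.

Lemma Li2_1 : Li2 1 = PI ^ 2 / 6.
Proof.
  unfold Li2. apply is_series_unique.
  apply (is_series_ext (fun k => / INR (S k) ^ 2)); [|apply basel].
  intro n. rewrite pow1. unfold Rdiv. rewrite Rmult_1_l. reflexivity.
Qed.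

Lemma ex_bL1 : ex_pseries bL 1.
Proof.
  unfold bL. apply ex_pseries_incr_1. apply ex_pseries_1.
  exists (PI ^ 2 / 6). apply basel.
Qed.

Lemma ln_le_m1 y : 0 < y -> ln y <= y - 1.
Proof. intro H. pose proof (exp_ineq1_le (ln y)). rewrite exp_ln in H0; lra. Qed.

Lemma flim_plus {T} (F : (T -> Prop) -> Prop) {FF : Filter F} (f g : T -> R) a b :
  filterlim f F (locally a) -> filterlim g F (locally b) ->
  filterlim (fun x => f x + g x) F (locally (a + b)).
Proof.
  intros H1 H2. apply (filterlim_comp_2 f g Rplus H1 H2). apply (filterlim_plus a b).
Qed.

Lemma refl_const x y : 0 < x < 1 -> 0 < y < 1 ->
  Li2 x + Li2 (1 - x) + ln x * ln (1 - x) = Li2 y + Li2 (1 - y) + ln y * ln (1 - y).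
Proof.
  intros Hx Hy.
  set (h := fun t => Li2 t + Li2 (1 - t) + ln t * ln (1 - t)).
  assert (Hd : forall t, 0 < t < 1 -> is_derive h t 0).
  { intros t Ht. unfold h.
    auto_derive.
    - repeat split; try (apply ex_Li2; lra); lra.
    - rewrite !Derive_Li2; try lra.
      change (1 + - t) with (1 - t).
      rewrite !G_eq; try lra.
      replace (1 - (1 - t)) with t by ring. field. lra. }
  exact (const_deriv h 0 1 Hd x y Hx Hy).
Qed.

Lemma lim_Li2_0 : filterlim Li2 (at_right 0) (locally 0).
Proof.
  apply (filterlim_filter_le_1 (F := locally 0)). apply filter_le_within.
  apply (filterlim_ext (PSeries bL)). { intro t. now rewrite Li2_PSeries. }
  replace 0 with (PSeries bL 0) at 2 by (rewrite PSeries_0; reflexivity).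
  apply continuity_pt_filterlim. apply PSeries_continuity. rewrite radius_bL. simpl. rewrite Rabs_R0. lra.
Qed.

Lemma lim_Li2_1 : filterlim (fun t => Li2 (1 - t)) (at_right 0) (locally (Li2 1)).
Proof.
  apply (filterlim_comp _ _ _ (fun t => 1 - t) Li2 _ (at_left 1)).
  - intros P [eps Heps]. exists eps. intros y Hy Hpos. apply Heps.
    + unfold ball in *; simpl in *. unfold AbsRing_ball in *. unfold abs, minus, plus, opp in *; simpl in *.
      replace (1 - y + - (1)) with (- (y + - 0)) by ring. rewrite Rabs_Ropp. auto.
    + lra.
  - apply (filterlim_ext (PSeries bL)). { intro t. now rewrite Li2_PSeries. }
    rewrite Li2_PSeries.
    pose proof (Abel bL) as H. rewrite radius_bL in H. simpl in H.
    apply H; try (simpl; lra). apply ex_bL1.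
Qed.

Lemma lnprod_bound t : 0 < t < 1/2 -> Rabs (ln t * ln (1 - t)) <= 4 * sqrt t.
Proof.
  intro Ht.
  assert (Hs : 0 < sqrt t) by (apply sqrt_lt_R0; lra).
  assert (Hss : sqrt t * sqrt t = t) by (apply sqrt_sqrt; lra).
  assert (L1 : ln (1 - t) <= 0) by (pose proof (ln_le_m1 (1 - t)); lra).
  assert (L2 : - (t / (1 - t)) <= ln (1 - t)).
  { pose proof (ln_le_m1 (/ (1 - t)) ltac:(apply Rinv_0_lt_compat; lra)).
    rewrite ln_Rinv in H by lra.
    assert (/ (1 - t) - 1 = t / (1 - t)) by (field; lra). lra. }
  assert (L3 : ln t < 0) by (rewrite <- ln_1; apply ln_increasing; lra).
  assert (L4 : - (2 / sqrt t) <= ln t).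
  { pose proof (ln_le_m1 (/ sqrt t) ltac:(apply Rinv_0_lt_compat; lra)).
    rewrite ln_Rinv in H by lra.
    assert (E : ln t = ln (sqrt t) + ln (sqrt t)) by (rewrite <- ln_mult, Hss; lra).
    unfold Rdiv. lra. }
  rewrite Rabs_pos_eq by nra.
  assert (t / (1 - t) <= 2 * t) by (apply (Rmult_le_reg_r (1 - t)); [lra|]; unfold Rdiv; rewrite Rmult_assoc, Rinv_l by lra; nra).
  assert (ln t * ln (1 - t) <= (2 / sqrt t) * (2 * t)) by nra.
  replace (2 / sqrt t * (2 * t)) with (4 * sqrt t) in H0 by (replace (2 * t) with (2 * (sqrt t * sqrt t)) by (rewrite Hss; ring); field; lra).
  lra.
Qed.

Lemma lim_lnprod : filterlim (fun t => ln t * ln (1 - t)) (at_right 0) (locally 0).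
Proof.
  apply filterlim_locally. intro eps.
  assert (He : 0 < Rmin (1/2) ((eps / 4) ^ 2)).
  { apply Rmin_glb_lt. lra. apply pow_lt. destruct eps; simpl; lra. }
  exists (mkposreal _ He). intros y Hy Hpos.
  unfold ball in *; simpl in *. unfold AbsRing_ball in *. unfold abs, minus, plus, opp in *; simpl in *.
  rewrite Ropp_0, Rplus_0_r in *. rewrite Rabs_pos_eq in Hy by lra.
  assert (y < 1/2) by (apply Rlt_le_trans with (1 := Hy); apply Rmin_l).
  assert (y < (eps / 4) ^ 2) by (apply Rlt_le_trans with (1 := Hy); apply Rmin_r).
  pose proof (lnprod_bound y ltac:(lra)).
  assert (sqrt y < eps / 4).
  { assert (0 < eps / 4) by (destruct eps; simpl; lra).
    assert (sqrt y < sqrt ((eps / 4) ^ 2)) by (apply sqrt_lt_1; [lra | apply pow_le; lra | lra]).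
    rewrite sqrt_pow2 in H3 by lra. exact H3. }
  lra.
Qed.

Lemma refl x : 0 < x < 1 -> Li2 x + Li2 (1 - x) = PI ^ 2 / 6 - ln x * ln (1 - x).
Proof.
  intro Hx.
  set (C := Li2 x + Li2 (1 - x) + ln x * ln (1 - x)).
  set (h := fun t => Li2 t + Li2 (1 - t) + ln t * ln (1 - t)).
  assert (H1 : filterlim h (at_right 0) (locally C)).
  { apply (filterlim_ext_loc (fun _ => C)).
    - exists (mkposreal 1 Rlt_0_1). intros y Hy Hpos.
      unfold ball in *; simpl in *. unfold AbsRing_ball in *. unfold abs, minus, plus, opp in *; simpl in *.
      rewrite Ropp_0, Rplus_0_r in *. rewrite Rabs_pos_eq in Hy by lra.
      unfold h, C. apply refl_const; lra.
    - apply filterlim_const. }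
  assert (H2 : filterlim h (at_right 0) (locally (0 + Li2 1 + 0))).
  { apply (flim_plus (at_right 0) (fun t => Li2 t + Li2 (1 - t)) (fun t => ln t * ln (1 - t))).
    - apply (flim_plus (at_right 0) Li2 (fun t => Li2 (1 - t))). apply lim_Li2_0. apply lim_Li2_1.
    - apply lim_lnprod. }
  assert (E : C = 0 + Li2 1 + 0).
  { apply (filterlim_locally_unique (F := at_right 0) h); auto. }
  unfold C in E. rewrite Li2_1 in E. lra.
Qed.

Lemma five_aux y t : 0 < y < 1 -> -1 < t < 1 ->
  is_derive (fun t => Li2 t + Li2 y - Li2 (t * y) - Li2 (t * (1 - y) / (1 - t * y))
     - Li2 (y * (1 - t) / (1 - t * y)) - ln ((1 - t) / (1 - t * y)) * ln ((1 - y) / (1 - t * y))) t 0.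
Proof.
  intros Hy Ht.
  assert (D : 0 < 1 - t * y) by nra.
  assert (H1 : -1 < t * y < 1) by nra.
  assert (H2 : -1 < t * (1 - y) / (1 - t * y) < 1).
  { split; apply (Rmult_lt_reg_r (1 - t * y)); auto; unfold Rdiv; rewrite Rmult_assoc, Rinv_l by lra; nra. }
  assert (H3 : -1 < y * (1 - t) / (1 - t * y) < 1).
  { split; apply (Rmult_lt_reg_r (1 - t * y)); auto; unfold Rdiv; rewrite Rmult_assoc, Rinv_l by lra; nra. }
  auto_derive.
  - repeat split; try (apply ex_Li2; lra); try lra; try (apply ex_Li2; auto); try (apply Rmult_lt_0_compat; [lra | apply Rinv_0_lt_compat; lra]).
  - change (1 + - (t * y)) with (1 - t * y). change (1 + - t) with (1 - t).
    change (fun x : R => Li2 x) with Li2.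
    change (t * (1 - y) * / (1 - t * y)) with (t * (1 - y) / (1 - t * y)).
    change (y * (1 - t) * / (1 - t * y)) with (y * (1 - t) / (1 - t * y)).
    change ((1 - t) * / (1 - t * y)) with ((1 - t) / (1 - t * y)).
    change ((1 - y) * / (1 - t * y)) with ((1 - y) / (1 - t * y)).
    rewrite !Derive_Li2 by auto.
    assert (E1 : 1 - t * (1 - y) / (1 - t * y) = (1 - t) / (1 - t * y)) by (field; lra).
    assert (E2 : 1 - y * (1 - t) / (1 - t * y) = (1 - y) / (1 - t * y)) by (field; lra).
    rewrite !ln_div by lra.
    destruct (Req_dec t 0) as [Z|Z].
    + subst t. replace (0 * y) with 0 by ring. replace (0 * (1 - y) / (1 - 0)) with 0 by (field; lra).
      replace (y * (1 - 0) / (1 - 0)) with y by (field; lra).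
      rewrite G0, G_eq by lra. rewrite Rminus_0_r, ln_1. field. lra.
    + assert (y * (1 - t) / (1 - t * y) <> 0).
      { unfold Rdiv. apply Rmult_integral_contrapositive. split. apply Rmult_integral_contrapositive. split; lra.
        apply Rinv_neq_0_compat; lra. }
      assert (t * (1 - y) / (1 - t * y) <> 0).
      { unfold Rdiv. apply Rmult_integral_contrapositive. split. apply Rmult_integral_contrapositive. split; lra.
        apply Rinv_neq_0_compat; lra. }
      rewrite !G_eq; auto; try (apply Rmult_integral_contrapositive; split; lra).
      rewrite E1, E2, !ln_div by lra.
      field. repeat split; lra.
Qed.

Lemma five x y : 0 < x < 1 -> 0 < y < 1 ->
  Li2 x + Li2 y - Li2 (x * y) = Li2 (x * (1 - y) / (1 - x * y)) + Li2 (y * (1 - x) / (1 - x * y))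
    + ln ((1 - x) / (1 - x * y)) * ln ((1 - y) / (1 - x * y)).
Proof.
  intros Hx Hy.
  pose proof (const_deriv _ (-1) 1 (fun t Ht => five_aux y t Hy Ht) x 0 ltac:(lra) ltac:(lra)) as E.
  simpl in E.
  replace (0 * y) with 0 in E by ring. replace (0 * (1 - y) / (1 - 0)) with 0 in E by (field; lra).
  replace (y * (1 - 0) / (1 - 0)) with y in E by (field; lra).
  replace ((1 - 0) / (1 - 0)) with 1 in E by (field; lra).
  rewrite ln_1, Li2_0 in E. lra.
Qed.

Definition mk (a b : R) : R := a + b * sqrt 5.

Lemma s5_pow k : sqrt 5 ^ (S (S k)) = 5 * sqrt 5 ^ k.
Proof. simpl. rewrite <- Rmult_assoc, sqrt_sqrt by lra. ring. Qed.

Lemma s5_bounds : 2236067 / 1000000 < sqrt 5 < 2236068 / 1000000.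
Proof.
  split.
  - apply Rsqr_incrst_0; [| lra | apply sqrt_pos]. rewrite Rsqr_sqrt by lra. unfold Rsqr. lra.
  - apply Rsqr_incrst_0; [| apply sqrt_pos | lra]. rewrite Rsqr_sqrt by lra. unfold Rsqr. lra.
Qed.

Ltac qs5 := unfold mk, alpha, beta, Rdiv; ring_simplify; repeat rewrite s5_pow; field.
Ltac ns5 := unfold mk, alpha, beta; pose proof s5_bounds; lra.

Goal alpha ^ 3 / 5 = mk (2/5) (1/5). qs5. Qed.
Goal mk (1/4) (1/4) * (mk (-1/4) (1/4)) = mk (1/4) (0). qs5. Qed.
Goal mk (3/4) (-1/4) * (alpha ^ 2 * 2 ^ 1) = alpha ^ 0 * 2^0 * sqrt 5 ^ 0. qs5. Qed.
Goal 0 < mk (3/4) (-1/4) < 1/2. split; ns5. Qed.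

Lemma alpha_pos : 0 < alpha.
Proof. unfold alpha. pose proof (sqrt_pos 5). lra. Qed.

Lemma ln_dec x (a1 a2 b1 b2 c1 c2 d1 d2 : nat) : 0 < x ->
  x * (alpha ^ a2 * 2 ^ b2 * 3 ^ c2 * sqrt 5 ^ d2) = alpha ^ a1 * 2 ^ b1 * 3 ^ c1 * sqrt 5 ^ d1 ->
  ln x = (INR a1 - INR a2) * ln alpha + (INR b1 - INR b2) * ln 2 + (INR c1 - INR c2) * ln 3
         + (INR d1 - INR d2) / 2 * ln 5.
Proof.
  intros Hx H. apply (f_equal ln) in H.
  pose proof alpha_pos as Ha. assert (H5 : 0 < sqrt 5) by (apply sqrt_lt_R0; lra).
  assert (P : forall (u : R) (n : nat), 0 < u -> 0 < u ^ n) by (intros; apply pow_lt; auto).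
  rewrite !ln_mult in H by (try apply Rmult_lt_0_compat; try apply Rmult_lt_0_compat; try apply Rmult_lt_0_compat; try apply P; lra).
  rewrite !ln_pow in H by lra.
  assert (E5 : ln (sqrt 5) = ln 5 / 2).
  { assert (ln (sqrt 5 * sqrt 5) = ln 5) by (rewrite sqrt_sqrt; lra). rewrite ln_mult in H0 by lra. lra. }
  rewrite E5 in H. lra.
Qed.

Lemma reflW x y : 0 < x < 1 -> x + y = 1 -> Li2 x + Li2 y = PI ^ 2 / 6 - ln x * ln y.
Proof. intros H E. replace y with (1 - x) by lra. now apply refl. Qed.

Lemma landenW x y z : -1 < x < 1/2 -> y * (x - 1) = x -> z = 1 - x ->
  Li2 x + Li2 y = - / 2 * ln z ^ 2.
Proof.
  intros H E1 E2. replace y with (x / (x - 1)). subst z. now apply landen.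
  apply (Rmult_eq_reg_r (x - 1)); [rewrite E1; field | ]; lra.
Qed.

Lemma dupW x y z : -1 < x < 1 -> y = - x -> z = x * x -> Li2 x + Li2 y = / 2 * Li2 z.
Proof. intros H E1 E2. subst. now apply dup. Qed.

Lemma fiveW x y p X Y A B : 0 < x < 1 -> 0 < y < 1 -> p = x * y ->
  X * (1 - p) = x * (1 - y) -> Y * (1 - p) = y * (1 - x) -> A * (1 - p) = 1 - x -> B * (1 - p) = 1 - y ->
  Li2 x + Li2 y - Li2 p = Li2 X + Li2 Y + ln A * ln B.
Proof.
  intros Hx Hy Ep EX EY EA EB. subst p.
  assert (D : 1 - x * y <> 0) by nra.
  replace X with (x * (1 - y) / (1 - x * y)) by (apply (Rmult_eq_reg_r (1 - x * y)); [rewrite EX; field | ]; auto).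
  replace Y with (y * (1 - x) / (1 - x * y)) by (apply (Rmult_eq_reg_r (1 - x * y)); [rewrite EY; field | ]; auto).
  replace A with ((1 - x) / (1 - x * y)) by (apply (Rmult_eq_reg_r (1 - x * y)); [rewrite EA; field | ]; auto).
  replace B with ((1 - y) / (1 - x * y)) by (apply (Rmult_eq_reg_r (1 - x * y)); [rewrite EB; field | ]; auto).
  now apply five.
Qed.

Lemma P1_mk : Li2 (mk (1/4) (1/4)) + Li2 (mk (1/4) (-1/4)) = PI ^ 2 / 12 + 2 * ln alpha ^ 2 - ln 2 ^ 2.
Proof.
  assert (LN1 : ln (mk (1/4) (1/4)) = ((1)) * ln alpha + ((-1)) * ln 2 + ((0)) * ln 3 + ((0)) * ln 5).
  { rewrite (ln_dec _ 1 0 0 1 0 0 0 0); [simpl INR; lra | ns5 | qs5]. }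
  assert (LN2 : ln (mk (3/4) (-1/4)) = ((-2)) * ln alpha + ((-1)) * ln 2 + ((0)) * ln 3 + ((0)) * ln 5).
  { rewrite (ln_dec _ 0 2 0 1 0 0 0 0); [simpl INR; lra | ns5 | qs5]. }
  assert (H1 : Li2 (mk (1/4) (1/4)) + Li2 (mk (3/4) (-1/4)) = PI ^ 2 / 6 - ln (mk (1/4) (1/4)) * ln (mk (3/4) (-1/4))) by (apply reflW; [split; ns5 | qs5]).
  rewrite LN1, LN2 in H1.
  assert (LN3 : ln (mk (3/4) (1/4)) = ((2)) * ln alpha + ((-1)) * ln 2 + ((0)) * ln 3 + ((0)) * ln 5).
  { rewrite (ln_dec _ 2 0 0 1 0 0 0 0); [simpl INR; lra | ns5 | qs5]. }
  assert (H2 : Li2 (mk (1/4) (-1/4)) + Li2 (mk (-2) (1)) = - / 2 * ln (mk (3/4) (1/4)) ^ 2) by (apply landenW; [split; ns5 | qs5 | qs5]).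
  rewrite LN3 in H2.
  assert (LN4 : ln (mk (-1/2) (1/2)) = ((-1)) * ln alpha + ((0)) * ln 2 + ((0)) * ln 3 + ((0)) * ln 5).
  { rewrite (ln_dec _ 0 1 0 0 0 0 0 0); [simpl INR; lra | ns5 | qs5]. }
  assert (LN5 : ln (mk (3) (-1)) = ((-2)) * ln alpha + ((1)) * ln 2 + ((0)) * ln 3 + ((0)) * ln 5).
  { rewrite (ln_dec _ 0 2 1 0 0 0 0 0); [simpl INR; lra | ns5 | qs5]. }
  assert (H3 : Li2 (mk (1/2) (0)) + Li2 (mk (3/2) (-1/2)) - Li2 (mk (3/4) (-1/4)) = Li2 (mk (3/2) (-1/2)) + Li2 (mk (-2) (1)) + ln (mk (-1/2) (1/2)) * ln (mk (3) (-1))) by (apply fiveW; [split; ns5 | split; ns5 | qs5 | qs5 | qs5 | qs5 | qs5]).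
  rewrite LN4, LN5 in H3.
  assert (LN6 : ln (mk (1/2) (0)) = ((0)) * ln alpha + ((-1)) * ln 2 + ((0)) * ln 3 + ((0)) * ln 5).
  { rewrite (ln_dec _ 0 0 0 1 0 0 0 0); [simpl INR; lra | ns5 | qs5]. }
  assert (H4 : Li2 (mk (1/2) (0)) + Li2 (mk (1/2) (0)) = PI ^ 2 / 6 - ln (mk (1/2) (0)) * ln (mk (1/2) (0))) by (apply reflW; [split; ns5 | qs5]).
  rewrite LN6 in H4.
  lra.
Qed.

Lemma P2_mk : Li2 (mk (2/5) (1/5)) + Li2 (mk (2/5) (-1/5)) = PI ^ 2 / 12 + 6 * ln alpha ^ 2 - 2 * ln 2 ^ 2 + 2 * ln 2 * ln 5 - ln 5 ^ 2 - Li2 (mk (-1/4) (0)).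
Proof.
  assert (LN1 : ln (mk (1/4) (1/4)) = ((1)) * ln alpha + ((-1)) * ln 2 + ((0)) * ln 3 + ((0)) * ln 5).
  { rewrite (ln_dec _ 1 0 0 1 0 0 0 0); [simpl INR; lra | ns5 | qs5]. }
  assert (LN2 : ln (mk (3/4) (-1/4)) = ((-2)) * ln alpha + ((-1)) * ln 2 + ((0)) * ln 3 + ((0)) * ln 5).
  { rewrite (ln_dec _ 0 2 0 1 0 0 0 0); [simpl INR; lra | ns5 | qs5]. }
  assert (H1 : Li2 (mk (1/4) (1/4)) + Li2 (mk (3/4) (-1/4)) = PI ^ 2 / 6 - ln (mk (1/4) (1/4)) * ln (mk (3/4) (-1/4))) by (apply reflW; [split; ns5 | qs5]).
  rewrite LN1, LN2 in H1.
  assert (LN3 : ln (mk (3/4) (1/4)) = ((2)) * ln alpha + ((-1)) * ln 2 + ((0)) * ln 3 + ((0)) * ln 5).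
  { rewrite (ln_dec _ 2 0 0 1 0 0 0 0); [simpl INR; lra | ns5 | qs5]. }
  assert (H2 : Li2 (mk (1/4) (-1/4)) + Li2 (mk (-2) (1)) = - / 2 * ln (mk (3/4) (1/4)) ^ 2) by (apply landenW; [split; ns5 | qs5 | qs5]).
  rewrite LN3 in H2.
  assert (LN4 : ln (mk (-1/2) (1/2)) = ((-1)) * ln alpha + ((0)) * ln 2 + ((0)) * ln 3 + ((0)) * ln 5).
  { rewrite (ln_dec _ 0 1 0 0 0 0 0 0); [simpl INR; lra | ns5 | qs5]. }
  assert (LN5 : ln (mk (3) (-1)) = ((-2)) * ln alpha + ((1)) * ln 2 + ((0)) * ln 3 + ((0)) * ln 5).
  { rewrite (ln_dec _ 0 2 1 0 0 0 0 0); [simpl INR; lra | ns5 | qs5]. }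
  assert (H3 : Li2 (mk (1/2) (0)) + Li2 (mk (3/2) (-1/2)) - Li2 (mk (3/4) (-1/4)) = Li2 (mk (3/2) (-1/2)) + Li2 (mk (-2) (1)) + ln (mk (-1/2) (1/2)) * ln (mk (3) (-1))) by (apply fiveW; [split; ns5 | split; ns5 | qs5 | qs5 | qs5 | qs5 | qs5]).
  rewrite LN4, LN5 in H3.
  assert (LN6 : ln (mk (1/2) (0)) = ((0)) * ln alpha + ((-1)) * ln 2 + ((0)) * ln 3 + ((0)) * ln 5).
  { rewrite (ln_dec _ 0 0 0 1 0 0 0 0); [simpl INR; lra | ns5 | qs5]. }
  assert (H4 : Li2 (mk (1/2) (0)) + Li2 (mk (1/2) (0)) = PI ^ 2 / 6 - ln (mk (1/2) (0)) * ln (mk (1/2) (0))) by (apply reflW; [split; ns5 | qs5]).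
  rewrite LN6 in H4.
  assert (LN7 : ln (mk (2/5) (1/5)) = ((3)) * ln alpha + ((0)) * ln 2 + ((0)) * ln 3 + ((-1)) * ln 5).
  { rewrite (ln_dec _ 3 0 0 0 0 0 0 2); [simpl INR; lra | ns5 | qs5]. }
  assert (LN8 : ln (mk (3/5) (-1/5)) = ((-2)) * ln alpha + ((1)) * ln 2 + ((0)) * ln 3 + ((-1)) * ln 5).
  { rewrite (ln_dec _ 0 2 1 0 0 0 0 2); [simpl INR; lra | ns5 | qs5]. }
  assert (H5 : Li2 (mk (2/5) (1/5)) + Li2 (mk (3/5) (-1/5)) = PI ^ 2 / 6 - ln (mk (2/5) (1/5)) * ln (mk (3/5) (-1/5))) by (apply reflW; [split; ns5 | qs5]).
  rewrite LN7, LN8 in H5.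
  assert (LN9 : ln (mk (3/5) (1/5)) = ((2)) * ln alpha + ((1)) * ln 2 + ((0)) * ln 3 + ((-1)) * ln 5).
  { rewrite (ln_dec _ 2 0 1 0 0 0 0 2); [simpl INR; lra | ns5 | qs5]. }
  assert (H6 : Li2 (mk (2/5) (-1/5)) + Li2 (mk (-11/4) (5/4)) = - / 2 * ln (mk (3/5) (1/5)) ^ 2) by (apply landenW; [split; ns5 | qs5 | qs5]).
  rewrite LN9 in H6.
  assert (LN10 : ln (mk (4/5) (0)) = ((0)) * ln alpha + ((2)) * ln 2 + ((0)) * ln 3 + ((-1)) * ln 5).
  { rewrite (ln_dec _ 0 0 2 0 0 0 0 2); [simpl INR; lra | ns5 | qs5]. }
  assert (H7 : Li2 (mk (-2) (1)) + Li2 (mk (3/4) (-1/4)) - Li2 (mk (-11/4) (5/4)) = Li2 (mk (1/5) (0)) + Li2 (mk (3/5) (-1/5)) + ln (mk (4/5) (0)) * ln (mk (2/5) (1/5))) by (apply fiveW; [split; ns5 | split; ns5 | qs5 | qs5 | qs5 | qs5 | qs5]).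
  rewrite LN10, LN7 in H7.
  assert (H8 : Li2 (mk (1/5) (0)) + Li2 (mk (-1/4) (0)) = - / 2 * ln (mk (4/5) (0)) ^ 2) by (apply landenW; [split; ns5 | qs5 | qs5]).
  rewrite LN10 in H8.
  lra.
Qed.

Lemma P7_mk : Li2 (mk (3/8) (1/8)) + Li2 (mk (3/8) (-1/8)) = PI ^ 2 / 6 + 2 * ln alpha ^ 2 - / 2 * ln 5 ^ 2 + 2 * ln 2 * ln 5 - 4 * ln 2 ^ 2 - Li2 (mk (1/5) (0)).
Proof.
  assert (LN1 : ln (mk (1/4) (1/4)) = ((1)) * ln alpha + ((-1)) * ln 2 + ((0)) * ln 3 + ((0)) * ln 5).
  { rewrite (ln_dec _ 1 0 0 1 0 0 0 0); [simpl INR; lra | ns5 | qs5]. }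
  assert (LN2 : ln (mk (3/4) (-1/4)) = ((-2)) * ln alpha + ((-1)) * ln 2 + ((0)) * ln 3 + ((0)) * ln 5).
  { rewrite (ln_dec _ 0 2 0 1 0 0 0 0); [simpl INR; lra | ns5 | qs5]. }
  assert (H1 : Li2 (mk (1/4) (1/4)) + Li2 (mk (3/4) (-1/4)) = PI ^ 2 / 6 - ln (mk (1/4) (1/4)) * ln (mk (3/4) (-1/4))) by (apply reflW; [split; ns5 | qs5]).
  rewrite LN1, LN2 in H1.
  assert (LN3 : ln (mk (3/4) (1/4)) = ((2)) * ln alpha + ((-1)) * ln 2 + ((0)) * ln 3 + ((0)) * ln 5).
  { rewrite (ln_dec _ 2 0 0 1 0 0 0 0); [simpl INR; lra | ns5 | qs5]. }
  assert (H2 : Li2 (mk (1/4) (-1/4)) + Li2 (mk (-2) (1)) = - / 2 * ln (mk (3/4) (1/4)) ^ 2) by (apply landenW; [split; ns5 | qs5 | qs5]).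
  rewrite LN3 in H2.
  assert (LN4 : ln (mk (-1/2) (1/2)) = ((-1)) * ln alpha + ((0)) * ln 2 + ((0)) * ln 3 + ((0)) * ln 5).
  { rewrite (ln_dec _ 0 1 0 0 0 0 0 0); [simpl INR; lra | ns5 | qs5]. }
  assert (LN5 : ln (mk (3) (-1)) = ((-2)) * ln alpha + ((1)) * ln 2 + ((0)) * ln 3 + ((0)) * ln 5).
  { rewrite (ln_dec _ 0 2 1 0 0 0 0 0); [simpl INR; lra | ns5 | qs5]. }
  assert (H3 : Li2 (mk (1/2) (0)) + Li2 (mk (3/2) (-1/2)) - Li2 (mk (3/4) (-1/4)) = Li2 (mk (3/2) (-1/2)) + Li2 (mk (-2) (1)) + ln (mk (-1/2) (1/2)) * ln (mk (3) (-1))) by (apply fiveW; [split; ns5 | split; ns5 | qs5 | qs5 | qs5 | qs5 | qs5]).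
  rewrite LN4, LN5 in H3.
  assert (LN6 : ln (mk (1/2) (0)) = ((0)) * ln alpha + ((-1)) * ln 2 + ((0)) * ln 3 + ((0)) * ln 5).
  { rewrite (ln_dec _ 0 0 0 1 0 0 0 0); [simpl INR; lra | ns5 | qs5]. }
  assert (H4 : Li2 (mk (1/2) (0)) + Li2 (mk (1/2) (0)) = PI ^ 2 / 6 - ln (mk (1/2) (0)) * ln (mk (1/2) (0))) by (apply reflW; [split; ns5 | qs5]).
  rewrite LN6 in H4.
  assert (H5 : Li2 (mk (1/4) (1/4)) + Li2 (mk (-1/4) (-1/4)) = / 2 * Li2 (mk (3/8) (1/8))) by (apply dupW; [split; ns5 | qs5 | qs5]).
  assert (H6 : Li2 (mk (1/4) (-1/4)) + Li2 (mk (-1/4) (1/4)) = / 2 * Li2 (mk (3/8) (-1/8))) by (apply dupW; [split; ns5 | qs5 | qs5]).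
  assert (LN7 : ln (mk (5/4) (1/4)) = ((1)) * ln alpha + ((-1)) * ln 2 + ((0)) * ln 3 + ((1/2)) * ln 5).
  { rewrite (ln_dec _ 1 0 0 1 0 0 1 0); [simpl INR; lra | ns5 | qs5]. }
  assert (H7 : Li2 (mk (-1/4) (-1/4)) + Li2 (mk (0) (1/5)) = - / 2 * ln (mk (5/4) (1/4)) ^ 2) by (apply landenW; [split; ns5 | qs5 | qs5]).
  rewrite LN7 in H7.
  assert (LN8 : ln (mk (5/4) (-1/4)) = ((-1)) * ln alpha + ((-1)) * ln 2 + ((0)) * ln 3 + ((1/2)) * ln 5).
  { rewrite (ln_dec _ 0 1 0 1 0 0 1 0); [simpl INR; lra | ns5 | qs5]. }
  assert (H8 : Li2 (mk (-1/4) (1/4)) + Li2 (mk (0) (-1/5)) = - / 2 * ln (mk (5/4) (-1/4)) ^ 2) by (apply landenW; [split; ns5 | qs5 | qs5]).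
  rewrite LN8 in H8.
  assert (H9 : Li2 (mk (0) (1/5)) + Li2 (mk (0) (-1/5)) = / 2 * Li2 (mk (1/5) (0))) by (apply dupW; [split; ns5 | qs5 | qs5]).
  lra.
Qed.

Lemma P8_mk : Li2 (mk (1/6) (1/6)) + Li2 (mk (1/6) (-1/6)) = ln alpha ^ 2 - / 4 * ln 5 ^ 2 + ln 3 * ln 5 - ln 3 ^ 2 + 3 / 2 * Li2 (mk (1/5) (0)) - / 2 * Li2 (mk (1/25) (0)).
Proof.
  assert (LN1 : ln (mk (1) (-1/5)) = ((-1)) * ln alpha + ((1)) * ln 2 + ((0)) * ln 3 + ((-1/2)) * ln 5).
  { rewrite (ln_dec _ 0 1 1 0 0 0 0 1); [simpl INR; lra | ns5 | qs5]. }
  assert (LN2 : ln (mk (3/2) (-3/10)) = ((-1)) * ln alpha + ((0)) * ln 2 + ((1)) * ln 3 + ((-1/2)) * ln 5).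
  { rewrite (ln_dec _ 0 1 0 0 1 0 0 1); [simpl INR; lra | ns5 | qs5]. }
  assert (H1 : Li2 (mk (1/6) (1/6)) + Li2 (mk (-1/4) (1/4)) - Li2 (mk (1/6) (0)) = Li2 (mk (0) (1/5)) + Li2 (mk (-1/2) (3/10)) + ln (mk (1) (-1/5)) * ln (mk (3/2) (-3/10))) by (apply fiveW; [split; ns5 | split; ns5 | qs5 | qs5 | qs5 | qs5 | qs5]).
  rewrite LN1, LN2 in H1.
  assert (LN3 : ln (mk (6/5) (0)) = ((0)) * ln alpha + ((1)) * ln 2 + ((1)) * ln 3 + ((-1)) * ln 5).
  { rewrite (ln_dec _ 0 0 1 0 1 0 0 2); [simpl INR; lra | ns5 | qs5]. }
  assert (H2 : Li2 (mk (-1/5) (0)) + Li2 (mk (1/6) (0)) = - / 2 * ln (mk (6/5) (0)) ^ 2) by (apply landenW; [split; ns5 | qs5 | qs5]).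
  rewrite LN3 in H2.
  assert (H3 : Li2 (mk (1/5) (0)) + Li2 (mk (-1/5) (0)) = / 2 * Li2 (mk (1/25) (0))) by (apply dupW; [split; ns5 | qs5 | qs5]).
  assert (LN4 : ln (mk (5/4) (-1/4)) = ((-1)) * ln alpha + ((-1)) * ln 2 + ((0)) * ln 3 + ((1/2)) * ln 5).
  { rewrite (ln_dec _ 0 1 0 1 0 0 1 0); [simpl INR; lra | ns5 | qs5]. }
  assert (H4 : Li2 (mk (-1/4) (1/4)) + Li2 (mk (0) (-1/5)) = - / 2 * ln (mk (5/4) (-1/4)) ^ 2) by (apply landenW; [split; ns5 | qs5 | qs5]).
  rewrite LN4 in H4.
  assert (H5 : Li2 (mk (0) (1/5)) + Li2 (mk (0) (-1/5)) = / 2 * Li2 (mk (1/5) (0))) by (apply dupW; [split; ns5 | qs5 | qs5]).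
  assert (LN5 : ln (mk (5/6) (1/6)) = ((1)) * ln alpha + ((0)) * ln 2 + ((-1)) * ln 3 + ((1/2)) * ln 5).
  { rewrite (ln_dec _ 1 0 0 0 0 1 1 0); [simpl INR; lra | ns5 | qs5]. }
  assert (H6 : Li2 (mk (1/6) (-1/6)) + Li2 (mk (-1/2) (3/10)) = - / 2 * ln (mk (5/6) (1/6)) ^ 2) by (apply landenW; [split; ns5 | qs5 | qs5]).
  rewrite LN5 in H6.
  lra.
Qed.

Lemma ab : alpha * beta = -1.
Proof. unfold alpha, beta. pose proof (sqrt_sqrt 5 ltac:(lra)). nra. Qed.
Lemma a_m_b : alpha - beta = sqrt 5.
Proof. unfold alpha, beta. field. Qed.
Lemma beta_neg : beta < 0.
Proof. unfold beta. pose proof s5_bounds. lra. Qed.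
Lemma alpha_gt1 : 1 < alpha.
Proof. unfold alpha. pose proof s5_bounds. lra. Qed.

Lemma even_case r : Nat.Even r ->
  Li2 (alpha ^ r / Luc r) + Li2 (beta ^ r / Luc r) = PI ^ 2 / 6 + INR r ^ 2 * ln alpha ^ 2 - ln (Luc r) ^ 2.
Proof.
  intros [k ->].
  pose proof alpha_pos as Ha. pose proof beta_neg as Hb.
  assert (Pa : 0 < alpha ^ (2 * k)) by (apply pow_lt; lra).
  assert (Pb : 0 < beta ^ (2 * k)) by (rewrite pow_mult; apply pow_lt; nra).
  assert (E : alpha ^ (2 * k) * beta ^ (2 * k) = 1).
  { rewrite <- Rpow_mult_distr, pow_mult. replace ((alpha * beta) ^ 2) with 1 by (rewrite ab; ring). apply pow1. }
  assert (PL : 0 < Luc (2 * k)) by (unfold Luc; lra).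
  unfold Luc in *.
  rewrite reflW.
  - assert (Eb : beta ^ (2 * k) = / alpha ^ (2 * k)) by (field_simplify_eq; [lra | lra]).
    assert (L1 : ln (alpha ^ (2 * k) / (alpha ^ (2 * k) + beta ^ (2 * k))) = INR (2 * k) * ln alpha - ln (alpha ^ (2 * k) + beta ^ (2 * k))).
    { unfold Rdiv. rewrite ln_mult, ln_Rinv, ln_pow by (try apply Rinv_0_lt_compat; lra). ring. }
    assert (L2 : ln (beta ^ (2 * k) / (alpha ^ (2 * k) + beta ^ (2 * k))) = - (INR (2 * k) * ln alpha) - ln (alpha ^ (2 * k) + beta ^ (2 * k))).
    { unfold Rdiv. rewrite ln_mult, ln_Rinv by (try apply Rinv_0_lt_compat; lra). rewrite Eb, ln_Rinv, ln_pow by lra. ring. }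
    rewrite L1, L2. ring.
  - split. apply Rdiv_lt_0_compat; lra. apply (Rmult_lt_reg_r (alpha ^ (2 * k) + beta ^ (2 * k))); [lra|].
    unfold Rdiv. rewrite Rmult_assoc, Rinv_l by lra. lra.
  - field. lra.
Qed.

Lemma ln_sqrt5 : ln (sqrt 5) = ln 5 / 2.
Proof.
  assert (ln (sqrt 5 * sqrt 5) = ln 5) by (rewrite sqrt_sqrt; lra).
  rewrite ln_mult in H by (apply sqrt_lt_R0; lra). lra.
Qed.

Lemma odd_case r : Nat.Odd r ->
  Li2 (alpha ^ r / (sqrt 5 * Fib r)) + Li2 (- beta ^ r / (sqrt 5 * Fib r))
    = PI ^ 2 / 6 + INR r ^ 2 * ln alpha ^ 2 - / 4 * ln 5 ^ 2 - ln 5 * ln (Fib r) - ln (Fib r) ^ 2.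
Proof.
  intros [k ->].
  pose proof alpha_pos as Ha. pose proof beta_neg as Hb.
  assert (H5 : 0 < sqrt 5) by (apply sqrt_lt_R0; lra).
  set (A := alpha ^ (2 * k + 1)). set (B := - beta ^ (2 * k + 1)).
  assert (Pa : 0 < A) by (apply pow_lt; lra).
  assert (Pb : 0 < B).
  { unfold B. rewrite pow_add, pow_mult, pow_1.
    assert (0 < (beta ^ 2) ^ k) by (apply pow_lt; nra). nra. }
  assert (E : A * B = 1).
  { unfold A, B. replace (alpha ^ (2 * k + 1) * - beta ^ (2 * k + 1)) with (- (alpha * beta) ^ (2 * k + 1))
      by (rewrite Rpow_mult_distr; ring).
    rewrite ab, pow_add, pow_mult. replace ((-1) ^ 2) with 1 by ring. rewrite pow1. ring. }
  assert (ES : sqrt 5 * Fib (2 * k + 1) = A + B).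
  { unfold Fib, A, B. rewrite a_m_b. field. lra. }
  assert (PF : 0 < Fib (2 * k + 1)).
  { apply (Rmult_lt_reg_l (sqrt 5)); auto. rewrite ES. lra. }
  rewrite ES. fold B.
  replace (- beta ^ (2 * k + 1)) with B by reflexivity.
  rewrite reflW.
  - assert (Eb : B = / A) by (field_simplify_eq; [lra | lra]).
    assert (LS : ln (A + B) = ln 5 / 2 + ln (Fib (2 * k + 1))).
    { rewrite <- ES, ln_mult, ln_sqrt5 by lra. ring. }
    assert (L1 : ln (A / (A + B)) = INR (2 * k + 1) * ln alpha - ln (A + B)).
    { unfold Rdiv. rewrite ln_mult, ln_Rinv by (try apply Rinv_0_lt_compat; lra). unfold A. rewrite ln_pow by lra. ring. }
    assert (L2 : ln (B / (A + B)) = - (INR (2 * k + 1) * ln alpha) - ln (A + B)).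
    { unfold Rdiv. rewrite ln_mult, ln_Rinv by (try apply Rinv_0_lt_compat; lra). rewrite Eb, ln_Rinv by lra.
      unfold A. rewrite ln_pow by lra. ring. }
    rewrite L1, L2, LS. field.
  - split. apply Rdiv_lt_0_compat; lra. apply (Rmult_lt_reg_r (A + B)); [lra|].
    unfold Rdiv. rewrite Rmult_assoc, Rinv_l by lra. lra.
  - field. lra.
Qed.

Theorem theorem14 :
  Li2 (alpha / 2) + Li2 (beta / 2)
    = PI ^ 2 / 12 + 2 * ln alpha ^ 2 - ln 2 ^ 2
  /\
  Li2 (alpha ^ 3 / 5) + Li2 (beta ^ 3 / 5)
    = PI ^ 2 / 12 + 6 * ln alpha ^ 2 - 2 * ln 2 ^ 2 + 2 * ln 2 * ln 5
      - ln 5 ^ 2 - Li2 (- (1 / 4))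
  /\
  (forall r : nat, Nat.Even r ->
     Li2 (alpha ^ r / Luc r) + Li2 (beta ^ r / Luc r)
       = PI ^ 2 / 6 + INR r ^ 2 * ln alpha ^ 2 - ln (Luc r) ^ 2)
  /\
  Li2 (alpha ^ 2 / 3) + Li2 (beta ^ 2 / 3)
    = PI ^ 2 / 6 + 4 * ln alpha ^ 2 - ln 3 ^ 2
  /\
  (forall r : nat, Nat.Odd r ->
     Li2 (alpha ^ r / (sqrt 5 * Fib r)) + Li2 (- beta ^ r / (sqrt 5 * Fib r))
       = PI ^ 2 / 6 + INR r ^ 2 * ln alpha ^ 2 - / 4 * ln 5 ^ 2
         - ln 5 * ln (Fib r) - ln (Fib r) ^ 2)
  /\
  Li2 (alpha / sqrt 5) + Li2 (- beta / sqrt 5)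
    = PI ^ 2 / 6 + ln alpha ^ 2 - / 4 * ln 5 ^ 2
  /\
  Li2 (alpha ^ 2 / 4) + Li2 (beta ^ 2 / 4)
    = PI ^ 2 / 6 + 2 * ln alpha ^ 2 - / 2 * ln 5 ^ 2 + 2 * ln 2 * ln 5
      - 4 * ln 2 ^ 2 - Li2 (1 / 5)
  /\
  Li2 (alpha / 3) + Li2 (beta / 3)
    = ln alpha ^ 2 - / 4 * ln 5 ^ 2 + ln 3 * ln 5 - ln 3 ^ 2
      + 3 / 2 * Li2 (1 / 5) - / 2 * Li2 (1 / 25).
Proof.
  split; [|split; [|split; [|split; [|split; [|split; [|split]]]]]].
  - replace (alpha / 2) with (mk (1/4) (1/4)) by qs5.
    replace (beta / 2) with (mk (1/4) (-1/4)) by qs5. apply P1_mk.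
  - replace (alpha ^ 3 / 5) with (mk (2/5) (1/5)) by qs5.
    replace (beta ^ 3 / 5) with (mk (2/5) (-1/5)) by qs5.
    replace (- (1 / 4)) with (mk (-1/4) (0)) by qs5. apply P2_mk.
  - apply even_case.
  - pose proof (even_case 2 ltac:(exists 1%nat; reflexivity)) as E.
    replace (Luc 2) with 3 in E by (unfold Luc; qs5). rewrite E. simpl INR. ring.
  - apply odd_case.
  - pose proof (odd_case 1 ltac:(exists 0%nat; reflexivity)) as E.
    replace (Fib 1) with 1 in E by (unfold Fib; field; rewrite a_m_b; apply Rgt_not_eq, sqrt_lt_R0; lra).
    rewrite !pow_1, Rmult_1_r, ln_1 in E. rewrite E. simpl INR. ring.
  - replace (alpha ^ 2 / 4) with (mk (3/8) (1/8)) by qs5.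
    replace (beta ^ 2 / 4) with (mk (3/8) (-1/8)) by qs5.
    replace (1 / 5) with (mk (1/5) (0)) by qs5. apply P7_mk.
  - replace (alpha / 3) with (mk (1/6) (1/6)) by qs5.
    replace (beta / 3) with (mk (1/6) (-1/6)) by qs5.
    replace (1 / 5) with (mk (1/5) (0)) by qs5.
    replace (1 / 25) with (mk (1/25) (0)) by qs5. apply P8_mk.
Qed.
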